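(* Let $\delta=x^{\mathbf d}f(\theta)$ be a homogeneous differential operator of degree $\mathbf d$ with $\mathbf d\neq\mathbf 0$, $-\mathbf d\in S$, $\mathbf d=q\mathbf e$ ($q\in\mathbb Z_{\ge1}$, $\mathbf e$ primitive). If $\delta$ fixes a nonzero monomial ideal $I$, then there exists a subset $\mathcal B\subseteq\mathbb N^n$ compatible with $\mathbf d$ such that (1) $\operatorname{val}(\mathbf a)>-\infty$ for all $\mathbf a\in W_{\mathcal B}$; (2) for all $\mathbf a\in V'_{\mathrm{mon}}(f)\cap W_{\mathcal B}$ and $i=0,\dots,q-1$, $\mathbf a-i\mathbf e\in V_{\mathrm{mon}}(f)$; (3) for all $\mathbf a,\mathbf b\in V'_{\mathrm{mon}}(f)\cap W_{\mathcal B}$, $\mathbf a-\mathbf b\notin S-\mathbf e$; and (4) $I=(x^{\mathbf a}\mid\mathbf a\in V'_{\mathrm{mon}}(f)\cap W_{\mathcal B})$ and $\operatorname{Exp} I=\{\mathbf a\in W_{\mathcal B}:\operatorname{pval}(\mathbf a)\ge0\}$.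
   Context: Standing notation. Fix $d\ge 1$. Let $\sigma\subseteq\mathbb R^d$ be a full-dimensional, strongly convex rational polyhedral cone, so $\sigma^\vee$ is full-dimensional and strongly convex. $S=\sigma^\vee\cap\mathbb Z^d$, $R=\mathbb C[S]$ with monomial basis $x^{\mathbf a}$, $\mathbf a\in S$. $h_1,\dots,h_n$ are the primitive support functions of the facets of $\sigma^\vee$, so $S=\{\mathbf a\in\mathbb Z^d:h_i(\mathbf a)\ge0\ \forall i\}$. $(g,m)!=\prod_{j=0}^m(g-j)$ for $m\ge0$, $=1$ for $m<0$; $H_{\mathbf d}=\prod_i(h_i,h_i(-\mathbf d)-1)!$. For $f$ divisible by $H_{\mathbf d}$, $\delta=x^{\mathbf d}f(\theta)$ acts by $\delta(x^{\mathbf a})=f(\mathbf a)x^{\mathbf a+\mathbf d}$. $\operatorname{Exp} I=\{\mathbf a\in S:x^{\mathbf a}\in I\}$; $I$ is $\delta$-fixed if $\delta(I)=I$. $V_{\mathrm{mon}}(f)=\{\mathbf a\in\mathbb Z^d:f(\mathbf a)=0\}$; $S-\mathbf e=\{\mathbf s-\mathbf e:\mathbf s\in S\}$. For $\mathbf a\in\mathbb Z^d$, $\operatorname{val}(\mathbf a)=\inf\{t\in\mathbb R:\mathbf a+t\mathbf d\in V_{\mathrm{mon}}(f)\}\in\mathbb R\cup\{\pm\infty\}$ ($\inf\emptyset=+\infty$). When $\operatorname{val}(\mathbf a)$ is finite, $\operatorname{pval}(\mathbf a)=\max\{t\in[\operatorname{val}(\mathbf a),\operatorname{val}(\mathbf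 a)+1):\mathbf a+t\mathbf d\in V_{\mathrm{mon}}(f)\}$ and $\operatorname{vpt}(\mathbf a)=\mathbf a+\operatorname{pval}(\mathbf a)\mathbf d$. $V'_{\mathrm{mon}}(f)=\{\operatorname{vpt}(\mathbf a):\mathbf a\in\mathbb Z^d,\ \operatorname{val}(\mathbf a)\text{ finite}\}$. A tuple $\beta\in\mathbb N^n$ is compatible with $\mathbf d$ if for every $i$, $\beta_i=0$ or $h_i(\mathbf d)=0$; $\mathcal B\subseteq\mathbb N^n$ is compatible with $\mathbf d$ if each element is. $W_\beta=\{\mathbf a\in S: h_i(\mathbf a)\ge\beta_i\ \forall i\}$, $W_{\mathcal B}=\bigcup_{\beta\in\mathcal B}W_\beta$. *)

(* Defs.v *)
From HB Require Import structures.
From mathcomp Require Import all_boot all_order all_algebra.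
From mathcomp Require Import mpoly.
Set Implicit Arguments. Unset Strict Implicit. Unset Printing Implicit Defensive.
Import Order.TTheory GRing.Theory Num.Theory.
Local Open Scope ring_scope.

Notation Zv dm := 'rV[int]_dm.

Definition hval (dm : nat) (h : Zv dm) (a : Zv dm) : int :=
  \sum_(j < dm) h 0 j * a 0 j.

Definition hvalQ (dm : nat) (h : Zv dm) (x : 'I_dm -> rat) : rat :=
  \sum_(j < dm) (h 0 j)%:~R * x j.

Definition primitive (dm : nat) (v : Zv dm) : Prop :=
  forall (k : int) (w : Zv dm), v = k *: w -> `|k| = 1.

(* h_1..h_n (n, h) are the primitive support functions of the facets of a
   full-dimensional, strongly convex rational polyhedral cone
   sigma^vee = {x | h_i(x) >= 0 for all i} in R^dm (tested on rational points,
   which suffices since all data are rational). *)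
Definition facet_data (dm n : nat) (h : 'I_n -> Zv dm) : Prop :=
  [/\
      forall i, primitive (h i),
      exists x : 'I_dm -> rat, forall i, 0 < hvalQ (h i) x,
      forall x : 'I_dm -> rat,
        (forall i, 0 <= hvalQ (h i) x) ->
        (forall i, 0 <= hvalQ (h i) (fun j => - x j)) -> x = (fun _ => 0)
    & (* each {h_i = 0} cuts out a facet (codim 1 face), and the h_i are distinct:
         some point of the cone lies on {h_i = 0} and strictly inside all other
         half-spaces *)
      forall i, exists x : 'I_dm -> rat,
        hvalQ (h i) x = 0 /\ forall j, j != i -> 0 < hvalQ (h j) x ].

Definition inS (dm n : nat) (h : 'I_n -> Zv dm) (a : Zv dm) : Prop :=
  forall i, 0 <= hval (h i) a.

(* An element of R is a finitely supported function S -> C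
   (sum_a g(a) x^a), seen as a function Zv dm -> C vanishing off S. *)
Definition inR (C : numClosedFieldType) (dm n : nat) (h : 'I_n -> Zv dm)
    (g : Zv dm -> C) : Prop :=
  exists s : seq (Zv dm), forall a, g a != 0 -> (a \in s) /\ inS h a.

Definition mono (C : numClosedFieldType) (dm : nat) (a : Zv dm) : Zv dm -> C :=
  fun b => (b == a)%:R.

(* product r * g in R, computed from a list s covering the support of r *)
Definition mulR (C : numClosedFieldType) (dm : nat) (s : seq (Zv dm))
    (r g : Zv dm -> C) : Zv dm -> C :=
  fun c => \sum_(a <- undup s) r a * g (c - a).

Definition ideal (C : numClosedFieldType) (dm n : nat) (h : 'I_n -> Zv dm)
    (I : (Zv dm -> C) -> Prop) : Prop :=
  [/\ forall g, I g -> inR h g,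
      I (fun _ => 0),
      forall g k, I g -> I k -> I (fun b => g b + k b)
    & forall r g (s : seq (Zv dm)), inR h r -> (forall a, r a != 0 -> a \in s) ->
        I g -> I (mulR s r g) ].

Definition genIdeal (C : numClosedFieldType) (dm n : nat) (h : 'I_n -> Zv dm)
    (G : Zv dm -> Prop) (g : Zv dm -> C) : Prop :=
  forall J, ideal h J -> (forall a, G a -> J (mono C a)) -> J g.

Definition ExpI (C : numClosedFieldType) (dm n : nat) (h : 'I_n -> Zv dm)
    (I : (Zv dm -> C) -> Prop) (a : Zv dm) : Prop :=
  inS h a /\ I (mono C a).

Definition monomial_ideal (C : numClosedFieldType) (dm n : nat) (h : 'I_n -> Zv dm)
    (I : (Zv dm -> C) -> Prop) : Prop :=
  ideal h I /\ forall g, I g <-> genIdeal h (ExpI h I) g.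

Definition vecC (C : numClosedFieldType) (dm : nat) (a : Zv dm) : 'I_dm -> C :=
  fun j => (a 0 j)%:~R.

Definition evalZ (C : numClosedFieldType) (dm : nat) (f : {mpoly C[dm]})
    (a : Zv dm) : C := f.@[vecC C a].

Definition hpoly (C : numClosedFieldType) (dm : nat) (h : Zv dm) : {mpoly C[dm]} :=
  \sum_(j < dm) (h 0 j)%:~R *: 'X_j.

Definition ffactm (C : numClosedFieldType) (dm : nat) (g : {mpoly C[dm]}) (m : int)
    : {mpoly C[dm]} :=
  if m < 0 then 1 else \prod_(j < (absz m).+1) (g - j%:R).

Definition Hd (C : numClosedFieldType) (dm n : nat) (h : 'I_n -> Zv dm) (d : Zv dm)
    : {mpoly C[dm]} :=
  \prod_(i < n) ffactm (hpoly C (h i)) (hval (h i) (- d) - 1).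

(* delta(sum_a g(a) x^a) = sum_a f(a) g(a) x^(a+d) *)
Definition delta (C : numClosedFieldType) (dm : nat) (f : {mpoly C[dm]}) (d : Zv dm)
    (g : Zv dm -> C) : Zv dm -> C :=
  fun b => evalZ f (b - d) * g (b - d).

Definition delta_fixed (C : numClosedFieldType) (dm : nat) (f : {mpoly C[dm]})
    (d : Zv dm) (I : (Zv dm -> C) -> Prop) : Prop :=
  forall k, I k <-> exists g, I g /\ k = delta f d g.

Definition Vmon (C : numClosedFieldType) (dm : nat) (f : {mpoly C[dm]}) (a : Zv dm)
    : Prop := evalZ f a = 0.

(* b = a + t d  (t rational; any real t with a + t d in Z^dm is rational as d <> 0) *)
Definition online (dm : nat) (d a : Zv dm) (t : rat) (b : Zv dm) : Prop :=
  forall j, ((b 0 j)%:~R : rat) = (a 0 j)%:~R + t * (d 0 j)%:~R.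

Definition Tset (C : numClosedFieldType) (dm : nat) (f : {mpoly C[dm]}) (d a : Zv dm)
    (t : rat) : Prop :=
  exists b, online d a t b /\ Vmon f b.

Definition val_minfty (C : numClosedFieldType) (dm : nat) (f : {mpoly C[dm]})
    (d a : Zv dm) : Prop :=
  forall m : rat, exists t, Tset f d a t /\ t < m.

Definition val_is (C : numClosedFieldType) (dm : nat) (f : {mpoly C[dm]})
    (d a : Zv dm) (v : rat) : Prop :=
  (forall t, Tset f d a t -> v <= t) /\
  (forall w, (forall t, Tset f d a t -> w <= t) -> w <= v).

Definition pval_is (C : numClosedFieldType) (dm : nat) (f : {mpoly C[dm]})
    (d a : Zv dm) (p : rat) : Prop :=
  exists v, [/\ val_is f d a v, Tset f d a p, v <= p < v + 1 &
    forall t, Tset f d a t -> v <= t < v + 1 -> t <= p].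

Definition Vprime (C : numClosedFieldType) (dm : nat) (f : {mpoly C[dm]})
    (d b : Zv dm) : Prop :=
  exists a p, pval_is f d a p /\ online d a p b.

Definition Wbeta (dm n : nat) (h : 'I_n -> Zv dm) (beta : 'I_n -> nat) (a : Zv dm)
    : Prop :=
  inS h a /\ forall i, (beta i)%:Z <= hval (h i) a.

Definition WB (dm n : nat) (h : 'I_n -> Zv dm) (B : ('I_n -> nat) -> Prop) (a : Zv dm)
    : Prop :=
  exists beta, B beta /\ Wbeta h beta a.

Definition compatible (dm n : nat) (h : 'I_n -> Zv dm) (d : Zv dm)
    (B : ('I_n -> nat) -> Prop) : Prop :=
  forall beta, B beta -> forall i, beta i = 0%N \/ hval (h i) d = 0.

(* Main.v *)
Require Import Defs.
From HB Require Import structures.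
From mathcomp Require Import all_boot all_order all_algebra.
From mathcomp Require Import mpoly.
From mathcomp Require Import ring lra zify.
From Stdlib Require Import Classical FunctionalExtensionality.
Import Order.TTheory GRing.Theory Num.Theory.
Set Implicit Arguments. Unset Strict Implicit.
Local Open Scope ring_scope.

Lemma prim_int (dm : nat) (e x : Zv dm) (s : rat) :
  primitive e -> (forall j, ((x 0 j)%:~R : rat) = s * (e 0 j)%:~R) ->
  exists z : int, s = z%:~R.
Proof.
move=> He Hx.
set m := denq s; set nn := numq s.
have Hn : (nn%:~R : rat) = s * m%:~R by rewrite numqE.
have Hcop : coprimez m nn.
  by rewrite /coprimez /gcdz gcdnC (eqP (coprime_num_den s)).
have Hdiv : forall j : 'I_dm, (m %| e ord0 j)%Z.
  move=> j; rewrite -(Gauss_dvdzr _ Hcop); apply/dvdzP; exists (x ord0 j).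
  apply/eqP; rewrite -(eqr_int rat) !rmorphM /= Hx Hn; apply/eqP; ring.
have Hm : `|m| = 1.
  apply: (He m (\row_j ((e ord0 j) %/ m)%Z)).
  apply/rowP=> j; rewrite !mxE mulrC divzK //.
have m1 : m = 1.
  have : 0 < m by apply: denq_gt0.
  by move=> Hp; move: Hm; rewrite gtr0_norm.
exists nn; by rewrite Hn m1 mulr1.
Qed.

Lemma hvalD (dm : nat) (h a b : Zv dm) : hval h (a + b) = hval h a + hval h b.
Proof. rewrite /hval -big_split; apply: eq_bigr => j _; by rewrite mxE mulrDr. Qed.

Lemma hvalZ (dm : nat) (h a : Zv dm) (k : int) : hval h (k *: a) = k * hval h a.
Proof. rewrite /hval mulr_sumr; apply: eq_bigr => j _; rewrite mxE; ring. Qed.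

Lemma hvalN (dm : nat) (h a : Zv dm) : hval h (- a) = - hval h a.
Proof. by rewrite -scaleN1r hvalZ mulN1r. Qed.

Lemma inS_add (dm n : nat) (h : 'I_n -> Zv dm) a b : inS h a -> inS h b -> inS h (a + b).
Proof. move=> Ha Hb i; rewrite hvalD; exact: addr_ge0. Qed.

Lemma inS_scale (dm n : nat) (h : 'I_n -> Zv dm) a (k : int) : 0 <= k -> inS h a -> inS h (k *: a).
Proof. move=> Hk Ha i; rewrite hvalZ; exact: mulr_ge0. Qed.

Lemma down (dm n : nat) (h : 'I_n -> Zv dm) (e : Zv dm) (E : Zv dm -> Prop) :
  inS h (- e) -> (forall c s, E c -> inS h s -> E (c + s)) ->
  forall a (j k : int), E (a + j *: e) -> k <= j -> E (a + k *: e).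
Proof.
move=> Hme Hup a j k Ha Hkj.
have -> : a + k *: e = (a + j *: e) + (j - k) *: (- e).
  apply/rowP => i; rewrite !mxE; ring.
apply: Hup => //; apply: inS_scale => //; by rewrite subr_ge0.
Qed.

Lemma max_exists (P : nat -> Prop) (m : nat) :
  P 0%N -> (forall k, P k -> (k <= m)%N) -> exists k, P k /\ ~ P k.+1.
Proof.
move=> P0 Hb; apply: NNPP => Hno.
have Hall : forall k, P k.
  elim=> [//|k IH]; apply: NNPP => Hk; apply: Hno; by exists k.
by have := Hb m.+1 (Hall _); rewrite ltnn.
Qed.

Lemma top (dm n : nat) (h : 'I_n -> Zv dm) (e : Zv dm) (E : Zv dm -> Prop) :
  (forall c, E c -> inS h c) -> (exists i, hval (h i) e < 0) ->
  forall a (j0 : int), E (a + j0 *: e) ->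
  exists J : int, E (a + J *: e) /\ ~ E (a + (J + 1) *: e).
Proof.
move=> HES [i Hi] a j0 H0.
pose P (k : nat) := E (a + (j0 + k%:Z) *: e).
have [k [Pk Pk1]] : exists k, P k /\ ~ P k.+1.
  apply: (@max_exists P (absz (hval (h i) (a + j0 *: e)))).
    by rewrite /P addr0.
  move=> k Hk; have := HES _ Hk i.
  have -> : a + (j0 + k%:Z) *: e = (a + j0 *: e) + k%:Z *: e.
    apply/rowP => l; rewrite !mxE; ring.
  rewrite hvalD hvalZ.
  set A := hval (h i) (a + j0 *: e); set he := hval (h i) e.
  have -> : (k <= `|A|)%N = (k%:Z <= `|A|%:Z) by [].
  move=> HA; have A0 : 0 <= A by nia.
  rewrite gez0_abs //; nia.
exists (j0 + k%:Z); split => //.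
move: Pk1; rewrite /P.
by have -> : j0 + (k.+1)%:Z = j0 + k%:Z + 1 by rewrite -addn1 PoszD addrA.
Qed.

Lemma nz (C : numClosedFieldType) (dm : nat) (f : {mpoly C[dm]}) (d e : Zv dm) (q : nat)
  (E : Zv dm -> Prop) :
  d = q%:Z *: e -> (forall b, E b -> evalZ f (b - d) != 0) ->
  (forall a (j k : int), E (a + j *: e) -> k <= j -> E (a + k *: e)) ->
  forall a (J j : int), E (a + J *: e) -> j + q%:Z <= J -> ~ Vmon f (a + j *: e).
Proof.
move=> Hd HEf Hdown a J j HJ Hj.
have := HEf _ (Hdown _ _ _ HJ Hj).
have -> : a + (j + q%:Z) *: e - d = a + j *: e.
  rewrite Hd; apply/rowP => l; rewrite !mxE; ring.
by move=> /eqP.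
Qed.

Lemma ztop (C : numClosedFieldType) (dm : nat) (f : {mpoly C[dm]}) (d e : Zv dm) (q : nat)
  (E : Zv dm -> Prop) :
  d = q%:Z *: e -> (forall a, E a -> evalZ f a != 0 -> E (a + d)) ->
  (forall a (j k : int), E (a + j *: e) -> k <= j -> E (a + k *: e)) ->
  forall a (J j : int), E (a + J *: e) -> ~ E (a + (J + 1) *: e) ->
  J < j + q%:Z -> j <= J -> Vmon f (a + j *: e).
Proof.
move=> Hd HEd Hdown a J j HJ HJ1 Hlt Hle.
rewrite /Vmon; case: (eqVneq (evalZ f (a + j *: e)) 0) => // Hne.
exfalso; apply: HJ1.
have := HEd _ (Hdown _ _ _ HJ Hle) Hne.
have -> : a + j *: e + d = a + (j + q%:Z) *: e.
  rewrite Hd; apply/rowP => l; rewrite !mxE; ring.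
move=> H; apply: (Hdown _ _ _ H); lia.
Qed.

Lemma tset_char (C : numClosedFieldType) (dm : nat) (f : {mpoly C[dm]}) (d e : Zv dm) (q : nat) :
  (0 < q)%N -> primitive e -> d = q%:Z *: e ->
  forall a t, Tset f d a t <-> exists j : int, t = j%:~R / q%:R /\ Vmon f (a + j *: e).
Proof.
move=> q0 He Hd a t; have qne : (q%:R : rat) != 0 by rewrite pnatr_eq0 -lt0n.
split.
  move=> [b [Hon Hv]].
  have [z Hz] : exists z : int, t * q%:R = z%:~R.
    apply: (@prim_int dm e (b - a)) => // l.
    rewrite !mxE rmorphB /= Hon Hd mxE rmorphM /=; ring.
  exists z; split; first by rewrite -Hz mulfK.
  suff -> : a + z *: e = b by [].
  apply/rowP => l; apply/eqP; rewrite -(eqr_int rat) !mxE rmorphD rmorphM /= Hon -Hz Hd mxE rmorphM /=.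
  apply/eqP; ring.
move=> [j [-> Hv]]; exists (a + j *: e); split => // l.
rewrite Hd !mxE rmorphD rmorphM rmorphM /=; field; exact: qne.
Qed.

Lemma lerq (q : nat) (x y : int) : (0 < q)%N ->
  (x%:~R / q%:R <= y%:~R / q%:R :> rat) = (x <= y).
Proof. move=> q0; rewrite ler_pM2r ?ler_int // invr_gt0 ltr0n //. Qed.

Lemma ltrq (q : nat) (x y : int) : (0 < q)%N ->
  (x%:~R / q%:R < y%:~R / q%:R :> rat) = (x < y).
Proof. move=> q0; rewrite ltr_pM2r ?ltr_int // invr_gt0 ltr0n //. Qed.

Lemma val_line (C : numClosedFieldType) (dm : nat) (f : {mpoly C[dm]}) (d e : Zv dm) (q : nat)
  (E : Zv dm -> Prop) :
  (0 < q)%N -> primitive e -> d = q%:Z *: e ->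
  (forall b, E b -> evalZ f (b - d) != 0) ->
  (forall a, E a -> evalZ f a != 0 -> E (a + d)) ->
  (forall a (j k : int), E (a + j *: e) -> k <= j -> E (a + k *: e)) ->
  forall a (J : int), E (a + J *: e) -> ~ E (a + (J + 1) *: e) ->
  val_is f d a ((J - q%:Z + 1)%:~R / q%:R).
Proof.
move=> q0 He Hd HEf HEd Hdown a J HJ HJ1; split.
  move=> t /(tset_char f q0 He Hd a t) [j [-> Hv]]; rewrite lerq //.
  rewrite leNgt; apply/negP => Hlt.
  apply: (nz Hd HEf Hdown HJ _ Hv); lia.
move=> w Hw; apply: Hw; apply/(tset_char f q0 He Hd a _).
exists (J - q%:Z + 1); split => //.
apply: (ztop Hd HEd Hdown HJ HJ1); lia.
Qed.

Lemma val_uniq (C : numClosedFieldType) (dm : nat) (f : {mpoly C[dm]}) (d a : Zv dm) v w :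
  val_is f d a v -> val_is f d a w -> v = w.
Proof.
move=> [Hv1 Hv2] [Hw1 Hw2]; apply/eqP; rewrite eq_le; apply/andP; split.
  exact: Hw2. exact: Hv2.
Qed.

Lemma pval_line (C : numClosedFieldType) (dm : nat) (f : {mpoly C[dm]}) (d e : Zv dm) (q : nat)
  (E : Zv dm -> Prop) :
  (0 < q)%N -> primitive e -> d = q%:Z *: e ->
  (forall b, E b -> evalZ f (b - d) != 0) ->
  (forall a, E a -> evalZ f a != 0 -> E (a + d)) ->
  (forall a (j k : int), E (a + j *: e) -> k <= j -> E (a + k *: e)) ->
  forall a (J : int), E (a + J *: e) -> ~ E (a + (J + 1) *: e) ->
  forall p, pval_is f d a p <-> p = J%:~R / q%:R.
Proof.
move=> q0 He Hd HEf HEd Hdown a J HJ HJ1 p.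
have Hval := val_line q0 He Hd HEf HEd Hdown HJ HJ1.
pose v0 : rat := (J - q%:Z + 1)%:~R / q%:R.
have Hv1 : v0 + 1 = (J + 1)%:~R / q%:R.
  rewrite /v0 !rmorphD rmorphN /= rmorph1; field; by rewrite pnatr_eq0 -lt0n.
have TJ : Tset f d a (J%:~R / q%:R).
  apply/(tset_char f q0 He Hd a _); exists J; split => //.
  apply: (ztop Hd HEd Hdown HJ HJ1); lia.
have rng : v0 <= J%:~R / q%:R < v0 + 1.
  by rewrite Hv1 /v0 lerq // ltrq //; apply/andP; split; lia.
split.
  move=> [v [Hv Tp Hr Hmax]].
  have vv0 : v = v0 by apply: val_uniq Hv Hval.
  subst v.
  apply/eqP; rewrite eq_le; apply/andP; split; last by apply: Hmax.
  move: Tp Hr => /(tset_char f q0 He Hd a _) [j [-> _]].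
  rewrite Hv1 /v0 lerq // ltrq // lerq // => /andP [_]; lia.
move=> ->; exists v0; split => //.
move=> t /(tset_char f q0 He Hd a _) [j [-> _]].
rewrite Hv1 /v0 lerq // ltrq // lerq // => /andP [_]; lia.
Qed.

Lemma online_char (dm : nat) (d e : Zv dm) (q : nat) :
  (0 < q)%N -> primitive e -> d = q%:Z *: e ->
  forall a t b, online d a t b <-> exists j : int, t = j%:~R / q%:R /\ b = a + j *: e.
Proof.
move=> q0 He Hd a t b; have qne : (q%:R : rat) != 0 by rewrite pnatr_eq0 -lt0n.
split.
  move=> Hon.
  have [z Hz] : exists z : int, t * q%:R = z%:~R.
    apply: (@prim_int dm e (b - a)) => // l.
    rewrite !mxE rmorphB /= Hon Hd mxE rmorphM /=; ring.
  exists z; split; first by rewrite -Hz mulfK.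
  apply/rowP => l; apply/eqP; rewrite -(eqr_int rat) !mxE rmorphD rmorphM /= Hon -Hz Hd mxE rmorphM /=.
  apply/eqP; ring.
move=> [j [-> ->]] l.
rewrite Hd !mxE rmorphD rmorphM rmorphM /=; field; exact: qne.
Qed.

Lemma mulR_mono (C : numClosedFieldType) (dm : nat) (s c : Zv dm) :
  mulR [::s] (mono C s) (mono C c) = mono C (c + s).
Proof.
apply: functional_extensionality => b.
rewrite /mulR /= big_cons big_nil /mono eqxx mul1r addr0.
by rewrite subr_eq.
Qed.

Lemma inR_mono (C : numClosedFieldType) (dm n : nat) (h : 'I_n -> Zv dm) (s : Zv dm) :
  inS h s -> inR h (mono C s).
Proof.
move=> Hs; exists [::s] => a; rewrite /mono.
case: (eqVneq a s) => [->|_]; first by rewrite mem_seq1 eqxx.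
by rewrite eqxx.
Qed.

Lemma supp_mono (C : numClosedFieldType) (dm : nat) (s : Zv dm) :
  forall a, mono C s a != 0 -> a \in [::s].
Proof.
move=> a; rewrite /mono mem_seq1; by case: (a == s); rewrite ?eqxx.
Qed.

Lemma E_up (C : numClosedFieldType) (dm n : nat) (h : 'I_n -> Zv dm) (I : (Zv dm -> C) -> Prop) :
  ideal h I -> forall c s, ExpI h I c -> inS h s -> ExpI h I (c + s).
Proof.
move=> [_ _ _ Hmul] c s [Sc Ic] Ss; split; first exact: inS_add.
rewrite -mulR_mono; apply: Hmul => //; [exact: inR_mono | exact: supp_mono].
Qed.

Lemma E_f (C : numClosedFieldType) (dm n : nat) (h : 'I_n -> Zv dm) (I : (Zv dm -> C) -> Prop)
  (f : {mpoly C[dm]}) d :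
  delta_fixed f d I -> forall b, ExpI h I b -> evalZ f (b - d) != 0.
Proof.
move=> Hfix b [_ Ib]; have [g [_ Hg]] := (Hfix _).1 Ib.
have := congr1 (fun k => k b) Hg; rewrite /mono /delta eqxx /= => H.
apply/eqP => H0; move: H; rewrite H0 mul0r => /eqP; by rewrite oner_eq0.
Qed.

Lemma E_d (C : numClosedFieldType) (dm n : nat) (h : 'I_n -> Zv dm) (I : (Zv dm -> C) -> Prop)
  (f : {mpoly C[dm]}) d :
  ideal h I -> delta_fixed f d I ->
  forall a, ExpI h I a -> evalZ f a != 0 -> ExpI h I (a + d).
Proof.
move=> [Hin _ _ Hmul] Hfix a [_ Ia] Hfa.
have Id : I (delta f d (mono C a)) by apply/(Hfix _); exists (mono C a).
pose r := fun x : Zv dm => (evalZ f a)^-1 * mono C 0 x.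
have Hr : inR h r.
  exists [::0] => x; rewrite /r /mono; case: (eqVneq x 0) => [->|_].
    by rewrite mem_seq1 eqxx => _; split => // i; rewrite /hval big1 // => j _; rewrite mxE mulr0.
  by rewrite mulr0 eqxx.
have Hrs : forall x, r x != 0 -> x \in [::0].
  move=> x; rewrite /r /mono mem_seq1; by case: (x == 0); rewrite ?mulr0 ?eqxx.
have Hm := Hmul _ _ _ Hr Hrs Id.
have Heq : mulR [::0] r (delta f d (mono C a)) = mono C (a + d).
  apply: functional_extensionality => b.
  rewrite /mulR /= big_cons big_nil addr0 /r /mono /delta eqxx mulr1 subr0.
  have -> : (b == a + d) = (b - d == a) by rewrite subr_eq.
  case: (eqVneq (b - d) a) => [->|_]; last by rewrite !mulr0.
  by rewrite mulr1 mulVf.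
rewrite Heq in Hm; split => //.
have [s Hs] := Hin _ Hm; have := Hs (a + d).
by rewrite /mono eqxx oner_eq0 => /(_ isT) [].
Qed.

Theorem mainTheorem8 (C : numClosedFieldType) (dm n : nat) (h : 'I_n -> 'rV[int]_dm)
  (d e : 'rV[int]_dm) (q : nat) (f : {mpoly C[dm]}) (I : ('rV[int]_dm -> C) -> Prop) :
  (0 < dm)%N ->
  facet_data h ->
  (exists g : {mpoly C[dm]}, f = g * Hd C h d) ->
  d != 0 ->
  inS h (- d) ->
  (0 < q)%N -> primitive e -> d = (q%:Z) *: e ->
  monomial_ideal h I ->
  (exists g, I g /\ g <> (fun _ => 0)) ->
  delta_fixed f d I ->
  exists B : ('I_n -> nat) -> Prop,
    [/\ compatible h d B,
        forall a, WB h B a -> ~ val_minfty f d a,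
        forall a, Vprime f d a -> WB h B a ->
                    forall i : nat, (i < q)%N -> Vmon f (a - (i%:Z) *: e),
        forall a b, Vprime f d a -> WB h B a -> Vprime f d b -> WB h B b ->
                    ~ inS h (a - b + e)
      & (forall g, I g <-> genIdeal h (fun a => Vprime f d a /\ WB h B a) g) /\
        (forall a, ExpI h I a <-> WB h B a /\ exists p, pval_is f d a p /\ 0 <= p) ].
Proof.
move=> _ [_ _ Hsc _] _ _ HmD q0 He Hd [Hid Hmon] _ Hfix.
pose E := ExpI h I.
have Hme : inS h (- e).
  move=> i; have := HmD i; rewrite Hd !hvalN hvalZ; nia.
have Hup : forall c s, E c -> inS h s -> E (c + s) by exact: E_up.
have HEf : forall b, E b -> evalZ f (b - d) != 0 by exact: E_f.
have HEd : forall a, E a -> evalZ f a != 0 -> E (a + d) by exact: E_d.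
have HES : forall c, E c -> inS h c by move=> c [].
have Hdown := down Hme Hup.
have Hbound : exists i, hval (h i) e < 0.
  apply: NNPP => Hno.
  have Hz : e = 0.
    have Hx := Hsc (fun j => (e 0 j)%:~R).
    have Hhv : forall i, hvalQ (h i) (fun j => (e 0 j)%:~R) = (hval (h i) e)%:~R.
      move=> i; rewrite /hvalQ /hval rmorph_sum; apply: eq_bigr => j _; by rewrite rmorphM.
    have Hhv' : forall i, hvalQ (h i) (fun j => - (e 0 j)%:~R) = (hval (h i) (- e))%:~R.
      move=> i; rewrite /hvalQ /hval rmorph_sum; apply: eq_bigr => j _; by rewrite mxE rmorphM rmorphN.
    have : (fun j => ((e 0 j)%:~R : rat)) = (fun _ => 0).
      apply: Hx => i; [rewrite Hhv ler0z | rewrite Hhv' ler0z; exact: Hme].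
      by rewrite leNgt; apply/negP => Hlt; apply: Hno; exists i.
    move=> Hf; apply/rowP => j; rewrite mxE; have := congr1 (fun g => g j) Hf.
    by move=> /= /eqP; rewrite intr_eq0 => /eqP.
  have := He 2 0; rewrite scaler0 Hz => /(_ erefl) /eqP; by [].
have Htop := top HES Hbound.
have Jge0 : forall a (J : int), E a -> ~ E (a + (J + 1) *: e) -> 0 <= J.
  move=> a J Ea HJ1; rewrite leNgt; apply/negP => HJ; apply: HJ1.
  apply: (Hdown _ 0); first by rewrite scale0r addr0.
  lia.
pose B (beta : 'I_n -> nat) := exists c, E c /\
   beta = fun i => if hval (h i) d == 0 then `|hval (h i) c|%N else 0%N.
have WBE : forall a, WB h B a -> exists j : int, E (a + j *: e).
  move=> a [beta [[c [Ec ->]] [Sa Hb]]].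
  pose k := (\max_i `|hval (h i) c|)%N.
  exists (- (k%:Z * q%:Z)).
  have -> : a + (- (k%:Z * q%:Z)) *: e = c + (a - c - k%:Z *: d).
    rewrite Hd; apply/rowP => l; rewrite !mxE; ring.
  apply: Hup => // i; have := Hb i; have := @leq_bigmax _ (fun i => `|hval (h i) c|%N) i.
  rewrite -/k !hvalD hvalN hvalN hvalZ.
  have hd0 : hval (h i) d <= 0 by have := HmD i; rewrite hvalN oppr_ge0.
  have Sai := Sa i.
  have Habs : hval (h i) c <= (`|hval (h i) c|%N)%:Z by rewrite abszE ler_norm.
  move: Habs; set u := `|hval (h i) c|%N => Habs.
  case: eqP => [-> | Hne]; first by lia.
  move=> Hk _; have Hlt : hval (h i) d < 0 by rewrite lt_neqAle hd0 andbT; apply/eqP.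
  nia.
have EWB : forall a, E a -> WB h B a.
  move=> a Ea; exists (fun i => if hval (h i) d == 0 then `|hval (h i) a|%N else 0%N).
  split; first by exists a.
  split; first exact: HES.
  move=> i; have := HES _ Ea i; case: eqP => _ // H; by rewrite gez0_abs.
have VE : forall a, Vprime f d a -> WB h B a -> E a /\ ~ E (a + e).
  move=> a [a0 [p [Hp Hon]]] HW.
  have [m [Hpm Ham]] := (online_char q0 He Hd a0 p a).1 Hon.
  have [j Ej] := WBE a HW.
  have Ej' : E (a0 + (m + j) *: e).
    by move: Ej; rewrite Ham; have -> : a0 + m *: e + j *: e = a0 + (m + j) *: e
      by apply/rowP => l; rewrite !mxE; ring.
  have [J0 [HJ0 HJ01]] := Htop _ _ Ej'.
  have := (pval_line q0 He Hd HEf HEd Hdown HJ0 HJ01 p).1 Hp.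
  rewrite Hpm => /eqP; rewrite eq_le lerq // lerq // => /andP [H1 H2].
  have mJ : m = J0 by apply/eqP; rewrite eq_le H1 H2.
  subst m; rewrite Ham; split => //.
  by have -> : a0 + J0 *: e + e = a0 + (J0 + 1) *: e by apply/rowP => l; rewrite !mxE; ring.
exists B; split.
- move=> beta [c [_ ->]] i; case: eqP => H; [right | left] => //.
- move=> a HW Hmin.
  have [j Ej] := WBE a HW.
  have [J [HJ HJ1]] := Htop _ _ Ej.
  have [Hv1 _] := val_line q0 He Hd HEf HEd Hdown HJ HJ1.
  have [t [Ht Hlt]] := Hmin ((J - q%:Z + 1)%:~R / q%:R).
  by have := Hv1 _ Ht; rewrite leNgt Hlt.
- move=> a HV HW i Hi.
  have [Ea Ne] := VE a HV HW.
  have := @ztop _ _ f d e q E Hd HEd Hdown a 0 (- i%:Z).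
  rewrite scale0r addr0 add0r scale1r scaleNr => H; apply: H => //; lia.
- move=> a b HVa HWa HVb HWb HS.
  have [_ Ne] := VE a HVa HWa; have [Eb _] := VE b HVb HWb.
  apply: Ne; have := Hup _ _ Eb HS.
  by have -> : b + (a - b + e) = a + e by apply/rowP => l; rewrite !mxE; ring.
split.
  move=> g; rewrite (Hmon g); split.
    move=> HE J HJ HG; apply: HE => // c Ec.
    have [J0 [HJ0 HJ01]] := Htop c 0 ltac:(by rewrite scale0r addr0).
    have J0p := Jge0 _ _ Ec HJ01.
    have Ev : E (c + J0 *: e) := HJ0.
    have Gv : Vprime f d (c + J0 *: e) /\ WB h B (c + J0 *: e).
      split; last exact: EWB.
      exists c, (J0%:~R / q%:R); split.
        exact/(pval_line q0 He Hd HEf HEd Hdown HJ0 HJ01).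
      by apply/(online_char q0 He Hd); exists J0.
    have -> : mono C c = mulR [:: J0 *: (- e)] (mono C (J0 *: (- e))) (mono C (c + J0 *: e)).
      rewrite mulR_mono; congr mono; apply/rowP => l; rewrite !mxE; ring.
    have Ss : inS h (J0 *: (- e)) by apply: inS_scale.
    case: HJ => _ _ _ Hmul; apply: Hmul; [exact: inR_mono | exact: supp_mono | exact: HG].
  move=> HG J HJ HE; apply: HG => // a [HV HW]; apply: HE; exact: (VE a HV HW).1.
move=> a; split.
  move=> Ea; split; first exact: EWB.
  have [J [HJ HJ1]] := Htop a 0 ltac:(by rewrite scale0r addr0).
  exists (J%:~R / q%:R); split.
    exact/(pval_line q0 He Hd HEf HEd Hdown HJ HJ1).
  by apply: divr_ge0; rewrite ?ler0z ?ler0n // (Jge0 _ _ Ea HJ1).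
move=> [HW [p [Hp Hp0]]].
have [j Ej] := WBE a HW.
have [J [HJ HJ1]] := Htop _ _ Ej.
have Hpe := (pval_line q0 He Hd HEf HEd Hdown HJ HJ1 p).1 Hp.
have HJ0 : 0 <= J.
  have Z : (0 : rat) = (0 : int)%:~R / q%:R by rewrite mul0r.
  by move: Hp0; rewrite Hpe Z lerq.
have := Hdown _ _ 0 HJ HJ0; by rewrite scale0r addr0.
Qed.
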